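(* Let $g$ be a completely additive arithmetic function. Then for every positive integer $n$, $$(\Lambda_{Ld}\ast g)(n)=g(n)Ld(n)-\frac12\sum_{p^\alpha\parallel n}\frac{\alpha(\alpha+1)g(p)}{p}.$$
   Context: The arithmetic logarithmic derivative is $Ld(n)=\sum_{p^\alpha\parallel n}\frac{\alpha}{p}$ (sum over primes $p\mid n$, $\alpha$ the exact exponent of $p$ in $n$). $\Lambda_{Ld}(n)=\frac1p$ if $n=p^k$ for some prime $p$ and integer $k\geq1$, and $0$ otherwise. $g$ completely additive means $g(mn)=g(m)+g(n)$ for all positive integers $m,n$. $\ast$ is Dirichlet convolution. *)

(* Defs.v *)
From mathcomp Require Import all_boot all_order all_algebra.
Set Implicit Arguments. Unset Strict Implicit. Unset Printing Implicit Defensive.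
Import Order.TTheory GRing.Theory Num.Theory.
Local Open Scope ring_scope.

(* Arithmetic functions are functions nat -> R, only values at positive
   integers matter. *)

Definition dconv (R : comNzRingType) (f g : nat -> R) (n : nat) : R :=
  \sum_(d <- divisors n) f d * g (n %/ d)%N.

Definition Ld (R : fieldType) (n : nat) : R :=
  \sum_(p <- primes n) (logn p n)%:R / p%:R.

Definition is_prime_power (n : nat) : bool :=
  [exists p : 'I_n.+1, [exists k : 'I_n.+1,
     [&& prime p, (0 < k)%N & n == ((p : nat) ^ (k : nat))%N]]].

(* Lambda_Ld(n) = 1/p if n = p^k (p prime, k >= 1), 0 otherwise;
   for such n, p is the smallest prime divisor pdiv n. *)
Definition Lambda_Ld (R : fieldType) (n : nat) : R :=
  if is_prime_power n then (pdiv n)%:R^-1 else 0.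

Definition completely_additive (R : zmodType) (g : nat -> R) : Prop :=
  forall m n : nat, (0 < m)%N -> (0 < n)%N -> g (m * n)%N = g m + g n.

(* Main.v *)
Require Import Defs.
From mathcomp Require Import all_boot all_order all_algebra.
From mathcomp Require Import ring zify.
Import Order.TTheory GRing.Theory Num.Theory.
Local Open Scope ring_scope.

Lemma ipp_pow (p k : nat) : prime p -> (0 < k)%N -> is_prime_power (p ^ k).
Proof.
move=> pp k0; apply/existsP.
have hp : (p < (p ^ k).+1)%N.
  rewrite ltnS; case: k k0 => // k _; rewrite expnS leq_pmulr // expn_gt0 prime_gt0 //.
have hk : (k < (p ^ k).+1)%N by apply: ltnW; rewrite ltnS ltn_expl // prime_gt1.
exists (Ordinal hp); apply/existsP; exists (Ordinal hk) => /=.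
by rewrite pp k0 eqxx.
Qed.

Lemma ipp_spec {d} : is_prime_power d ->
  exists q j, [/\ prime q, (0 < j)%N & d = (q ^ j)%N].
Proof.
move=> /existsP [q /existsP [j /and3P [pq j0 /eqP ->]]].
by exists q, j.
Qed.

Lemma pow_eq_prime p q k j : prime p -> prime q -> (0 < k)%N -> (0 < j)%N ->
  (p ^ k)%N = (q ^ j)%N -> p = q.
Proof.
move=> pp pq; case: k => // k; case: j => // j _ _ e.
by rewrite -(pdiv_pfactor k pp) e pdiv_pfactor.
Qed.

Lemma gpowE (R : zmodType) (g : nat -> R) p k : completely_additive g ->
  (0 < p)%N -> g (p ^ k)%N = g p *+ k.
Proof.
move=> ga p0; elim: k => [|k IH].
  have h := ga 1%N 1%N isT isT; rewrite muln1 in h.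
  by rewrite expn0 mulr0n; apply: (addrI (g 1%N)); rewrite addr0 -h.
by rewrite expnS ga ?expn_gt0 ?p0 // IH mulrS.
Qed.

Lemma tri_sum a : (2 * \sum_(1 <= k < a.+1) k = a * a.+1)%N.
Proof.
elim: a => [|a IH]; first by rewrite big_geq.
rewrite big_nat_recr //= mulnDr IH; lia.
Qed.

Theorem theorem3p2 (R : realFieldType) (g : nat -> R) :
  completely_additive g ->
  forall n : nat, (0 < n)%N ->
    dconv (@Lambda_Ld R) g n =
      g n * Ld R n -
      2%:R^-1 * \sum_(p <- primes n)
                  ((logn p n * (logn p n).+1)%:R * g p / p%:R).
Proof.
move=> ga n n0.
set c := fun p k => (p%:R : R)^-1 * g (n %/ p ^ k)%N.
have step1 : forall d, d \in divisors n ->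
  Lambda_Ld R d * g (n %/ d)%N =
  \sum_(p <- primes n) \sum_(1 <= k < (logn p n).+1)
     (d == p ^ k)%N%:R * c p k.
  move=> d; rewrite -dvdn_divisors // => dn.
  rewrite /Lambda_Ld; case: ifP => ipp.
    have [q [j [pq j0 dE]]] := ipp_spec ipp.
    have qn : q \in primes n.
      rewrite mem_primes pq n0 /=; apply: dvdn_trans dn.
      by rewrite dE; case: (j) j0 => // j' _; rewrite expnS dvdn_mulr.
    rewrite (bigD1_seq q qn (primes_uniq n)) /= [X in _ + X]big1_seq ?addr0; last first.
      move=> p /andP [pnq pn]; rewrite big1_seq // => k /andP [_].
      rewrite mem_index_iota => /andP [k0 _].
      case: eqP; rewrite ?mul0r // dE => e.
      move: pn; rewrite mem_primes => /andP [pp _].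
      have qp := @pow_eq_prime q p j k pq pp j0 k0 e.
      by rewrite qp eqxx in pnq.
    have jin : j \in index_iota 1 (logn q n).+1.
      rewrite mem_index_iota j0 ltnS -pfactor_dvdn // -dE //.
    rewrite (bigD1_seq j jin (iota_uniq _ _)) /= [X in _ + X]big1_seq ?addr0; last first.
      move=> k /andP [kj _]; rewrite dE eqn_exp2l ?prime_gt1 //.
      by rewrite eq_sym (negbTE kj) mul0r.
    rewrite dE eqxx mul1r /c; congr (_ * _).
    by case: (j) j0 => // j' _; rewrite pdiv_pfactor.
  rewrite mul0r big1_seq // => p /andP [_ pn].
  rewrite big1_seq // => k /andP [_]; rewrite mem_index_iota => /andP [k0 _].
  case: eqP; rewrite ?mul0r // => e.
  move: pn; rewrite mem_primes => /andP [pp _].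
  by rewrite e ipp_pow in ipp.
rewrite /dconv (eq_big_seq _ step1) exchange_big /=.
rewrite /Ld big_distrr /= big_distrr /= -sumrB.
apply: eq_big_seq => p pn.
have pp : prime p by move: pn; rewrite mem_primes => /andP [].
have p0 : (0 < p)%N := prime_gt0 pp.
set a := logn p n.
rewrite exchange_big /=.
have inner : forall k, k \in index_iota 1 a.+1 ->
   \sum_(d <- divisors n) (d == p ^ k)%N%:R * c p k = c p k.
  move=> k; rewrite mem_index_iota => /andP [_ ka].
  have kin : (p ^ k)%N \in divisors n by rewrite -dvdn_divisors // pfactor_dvdn.
  rewrite (bigD1_seq _ kin (divisors_uniq n)) /= eqxx mul1r.
  rewrite [X in _ + X]big1_seq ?addr0 // => d /andP [dk _].
  by rewrite (negbTE dk) mul0r.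
rewrite (eq_big_seq _ inner).
have cE : forall k, k \in index_iota 1 a.+1 ->
   c p k = (p%:R)^-1 * (g n - k%:R * g p).
  move=> k; rewrite mem_index_iota => /andP [_ ka].
  have dv : (p ^ k %| n)%N by rewrite pfactor_dvdn.
  rewrite /c {2}(esym (divnK dv)) ga; last first.
    by rewrite expn_gt0 p0.
    by rewrite divn_gt0 ?expn_gt0 ?p0 // dvdn_leq.
  rewrite (@gpowE _ g p k ga p0).
  by rewrite mulr_natl addrK.
rewrite (eq_big_seq _ cE) -big_distrr /= sumrB sumr_const_nat -big_distrl /=.
rewrite -natr_sum.
have hS := tri_sum a.
have e2 : ((a * a.+1)%:R : R) = 2%:R * (\sum_(1 <= k < a.+1) k)%N%:R.
  by rewrite -hS natrM.
rewrite e2 subn1 /=.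
have pz : (p%:R : R) != 0 by rewrite pnatr_eq0 -lt0n.
have tz : (2%:R : R) != 0 by rewrite pnatr_eq0.
rewrite -mulr_natr; field.
by [].
Qed.
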